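(* Let $\alpha \in [0,1)$. For every $k \in \{0,\dots,m-1\}$, with $\mathbf{S}_k = (S_k,\dots,S_k)$, $$B_{T_\ell}^*(\mathbf{S}_k) = S_{\min}\left(1 - \sqrt[n]{\alpha}\right) + S_k \sqrt[n]{\alpha}.$$
   Context: Fix integers $m \ge 2$, $n \ge 1$ and reals $S_{\min} < S_{\max}$; $S = \{S_0,\dots,S_{m-1}\}$ with $S_k = S_{\min} + k\frac{S_{\max}-S_{\min}}{m-1}$. $\mathcal{F}$ is the set of probability distributions on $S$, identified with the probability simplex in $\mathbb{R}^m$ with the Euclidean topology; $E[F]$ is the mean. $\Omega$ is the set of samples of size $n$ from $S$, identified with their sorted versions $x_{(1)} \le \dots \le x_{(n)}$. $P_F[\Omega']$ is the probability that the sorted sample of $n$ i.i.d. draws from $F$ lies in $\Omega' \subseteq \Omega$; $\mathcal{G}(\Omega',\alpha) = \{F : P_F[\Omega'] > \alpha\}$ and $\mathcal{F}(\Omega',\alpha)$ is its closure. The low lexicographic order $T_\ell$: $\mathbf{x} \le_{T_\ell} \mathbf{y}$ iff $\mathbf{x}=\mathbf{y}$ or at the smallest index $j$ with $x_{(j)} \ne y_{(j)}$ we have $x_{(j)} < y_{(j)}$. $\Omega(\mathbf{x},T_\ell) = \{\mathbf{y} : \mathbf{x} \le_{T_\ell} \mathbf{y}\}$ and $B_{T_\ell}^*(\mathbf{x}) = \min\{E[F] : F \in \mathcal{F}(\Omega(\mathbf{x},T_\ell),\alpha)\}$. *)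

(* Defs.v *)
From HB Require Import structures.
From mathcomp Require Import all_boot all_order all_algebra.
From mathcomp Require Import all_classical all_reals all_analysis.
Unset Implicit Arguments. Unset Printing Implicit Defensive.
Import Order.TTheory GRing.Theory Num.Theory.
Import numFieldNormedType.Exports.
Local Open Scope classical_set_scope.
Local Open Scope ring_scope.

Section Defs.
Variable R : realType.

Definition Sgrid (m : nat) (Smin Smax : R) (k : nat) : R :=
  Smin + k%:R * ((Smax - Smin) / (m.-1)%:R).

(* Distributions on S, identified with the probability simplex in R^m
   (row vectors 'rV[R]_m with their canonical normed topology). *)
Definition simplex (m : nat) : set 'rV[R]_m :=
  [set p | (forall i, 0 <= p ord0 i) /\ \sum_(i < m) p ord0 i = 1].

Definition mean (m : nat) (Smin Smax : R) (p : 'rV[R]_m) : R :=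
  \sum_(i < m) p ord0 i * Sgrid m Smin Smax i.

Definition sorted_sample (m n : nat) (Smin Smax : R) (t : {ffun 'I_n -> 'I_m})
  : seq R := sort <=%R [seq Sgrid m Smin Smax (t j) | j <- enum 'I_n].

(* P_F[Omega']: probability that the sorted sample of n i.i.d. draws
   from F lies in Omega' (a set of sorted samples, given as a predicate). *)
Definition probF (m n : nat) (Smin Smax : R) (p : 'rV[R]_m)
  (Om : pred (seq R)) : R :=
  \sum_(t : {ffun 'I_n -> 'I_m} | Om (sorted_sample m n Smin Smax t))
     \prod_(j < n) p ord0 (t j).

Definition Gset (m n : nat) (Smin Smax : R) (Om : pred (seq R)) (alpha : R)
  : set 'rV[R]_m :=
  [set p | simplex m p /\ alpha < probF m n Smin Smax p Om].

Definition Fset (m n : nat) (Smin Smax : R) (Om : pred (seq R)) (alpha : R)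
  : set 'rV[R]_m := closure (Gset m n Smin Smax Om alpha).

Fixpoint lexle (x y : seq R) : bool :=
  match x, y with
  | a :: x', b :: y' => (a < b) || ((a == b) && lexle x' y')
  | _, _ => true
  end.

Definition Omega_lex (x : seq R) : pred (seq R) :=
  fun y => lexle x y.

Definition is_min (A : set R) (v : R) : Prop :=
  A v /\ forall a, A a -> v <= a.

Definition Bstar_is (m n : nat) (Smin Smax alpha : R)
  (x : seq R) (v : R) : Prop :=
  is_min [set mean m Smin Smax p | p in Fset m n Smin Smax (Omega_lex x) alpha] v.

End Defs.
Arguments lexle {R}.
Arguments Omega_lex {R}.
Arguments is_min {R}.
Arguments Sgrid {R}.
Arguments simplex {R}.
Arguments mean {R}.
Arguments sorted_sample {R}.
Arguments probF {R}.
Arguments Gset {R}.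
Arguments Fset {R}.
Arguments Bstar_is {R}.

(* Main.v *)
Require Import Defs.
From HB Require Import structures.
From mathcomp Require Import all_boot all_order all_algebra.
From mathcomp Require Import all_classical all_reals all_analysis.
From mathcomp Require Import lra.
Import Order.TTheory GRing.Theory Num.Theory.
Import numFieldNormedType.Exports.
Local Open Scope ring_scope.
Set Implicit Arguments.

Lemma lexle_nseq (R : realType) (s : R) (ys : seq R) :
  sorted <=%R ys -> lexle (nseq (size ys) s) ys = all (fun y => s <= y) ys.
Proof.
elim: ys => [|y ys IH] //= Hs.
rewrite (IH (path_sorted Hs)).
have Hall : all (fun z => y <= z) ys := order_path_min le_trans Hs.
case: (ltgtP s y) => [sy|ys'|->].
- rewrite orTb andTb; apply/esym/allP => z /(allP Hall) yz.
  exact: le_trans (ltW sy) yz.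
- by [].
- by rewrite orFb !andTb.
Qed.

Lemma Sgrid_le (R : realType) (m : nat) (Smin Smax : R) (i j : nat) :
  (2 <= m)%N -> Smin < Smax ->
  (Sgrid m Smin Smax i <= Sgrid m Smin Smax j) = (i <= j)%N.
Proof.
move=> hm hS; rewrite /Sgrid lerD2l ler_pM2r ?ler_nat //.
apply: divr_gt0; first by rewrite subr_gt0.
rewrite ltr0n; case: m hm => [|[|m]] //.
Qed.

Lemma Sgrid_ge (R : realType) (m : nat) (Smin Smax : R) (i : nat) :
  (2 <= m)%N -> Smin < Smax -> Smin <= Sgrid m Smin Smax i.
Proof.
move=> hm hS; have := @Sgrid_le R m Smin Smax 0 i hm hS.
by rewrite leq0n /Sgrid mul0r addr0.
Qed.

Lemma probF_nseq (R : realType) (m n : nat) (Smin Smax : R) (p : 'rV[R]_m)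
  (k : 'I_m) : (2 <= m)%N -> Smin < Smax ->
  probF m n Smin Smax p (Omega_lex (nseq n (Sgrid m Smin Smax k))) =
  (\sum_(i < m | (k <= i)%N) p ord0 i) ^+ n.
Proof.
move=> hm hS.
rewrite -[n in _ ^+ n]card_ord -prodr_const.
rewrite (bigA_distr_big (fun i : 'I_m => (k <= i)%N) (fun _ i => p ord0 i)).
rewrite /probF; apply: eq_bigl => t.
have Hsz : size (sorted_sample m n Smin Smax t) = n.
  by rewrite /sorted_sample size_sort size_map size_enum_ord.
rewrite /Omega_lex -{1}Hsz lexle_nseq; last by rewrite /sorted_sample; apply: sort_sorted; exact: le_total.
rewrite /sorted_sample all_sort all_map.
apply/allP/ffun_onP => H j.
  by have := H j (mem_enum _ j); rewrite /= Sgrid_le.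
by move=> _; rewrite /= Sgrid_le //; exact: H.
Qed.

Lemma closure_pre (T U : topologicalType) (f : T -> U) (A : set T) (D : set U) :
  continuous f -> closed D -> (forall x, A x -> D (f x)) ->
  forall x, closure A x -> D (f x).
Proof.
move=> cf cD AD x cx.
have E : closed (f @^-1` D) by move/continuous_closedP: cf; apply.
move/closure_id: E => E.
have := closureS (A:=A) (B:=f @^-1` D) AD.
by rewrite -E; apply.
Qed.

Theorem lemma7 (R : realType) (m n : nat) (Smin Smax alpha : R)
  (hm : (2 <= m)%N) (hn : (1 <= n)%N) (hS : Smin < Smax)
  (ha0 : 0 <= alpha) (ha1 : alpha < 1) (k : 'I_m) :
  Bstar_is m n Smin Smax alpha (nseq n (Sgrid m Smin Smax k))
    (Smin * (1 - alpha `^ (n%:R^-1)) + Sgrid m Smin Smax k * alpha `^ (n%:R^-1)).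
Proof.
set a := alpha `^ n%:R^-1.
have a0 : 0 <= a := powR_ge0 _ _.
have an : a ^+ n = alpha.
  rewrite /a -powR_mulrn ?powR_ge0 // -powRrM mulVf ?powRr1 //.
  by rewrite pnatr_eq0 -lt0n.
have a1 : a < 1.
  rewrite ltNge; apply/negP => h; have := exprn_ege1 n h.
  by rewrite an => /(lt_le_trans ha1); rewrite ltxx.
set s := Sgrid m Smin Smax k.
have sS : Smin <= s by apply: Sgrid_ge.
have m0 : (0 < m)%N by apply: leq_trans hm.
pose i0 : 'I_m := Ordinal m0.
pose c0 : 'rV[R]_m := \row_(i < m) (i == i0)%:R.
pose c1 : 'rV[R]_m := \row_(i < m) ((i == k)%:R - (i == i0)%:R).
pose pt (t : R) : 'rV[R]_m := c0 + t *: c1.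
have ptE t i : pt t ord0 i = (i == i0)%:R + t * ((i == k)%:R - (i == i0)%:R).
  by rewrite !mxE.
have sum_ind (F : 'I_m -> R) j : \sum_(i < m) (i == j)%:R * F i = F j.
  rewrite (bigD1 j) //= eqxx mul1r big1 ?addr0 // => i /negbTE ->.
  by rewrite mul0r.
have sum_ind1 j : \sum_(i < m) (i == j)%:R = 1 :> R.
  by rewrite -[RHS](sum_ind (fun _ => 1) j); apply: eq_bigr => i _; rewrite mulr1.
have ptS t : 0 <= t <= 1 -> simplex m (pt t).
  move=> /andP[t0 t1]; split.
  - move=> i; rewrite ptE; case: (i == i0); case: (i == k) => /=;
      rewrite ?mulr1n ?mulr0n; lra.
  - under eq_bigr do rewrite ptE.
    rewrite big_split /= -mulr_sumr sumrB !sum_ind1; lra.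
have ptM t : mean m Smin Smax (pt t) = Smin + t * (s - Smin).
  rewrite /mean.
  under eq_bigr do rewrite ptE mulrDl -mulrA mulrBl.
  rewrite big_split /= -mulr_sumr sumrB !sum_ind /s /=.
  by rewrite /Sgrid mul0r addr0.
have ptQ t : 0 <= t <= 1 -> t <= \sum_(i < m | (k <= i)%N) pt t ord0 i.
  move=> /andP[t0 t1].
  have [Hp _] := ptS t (introT andP (conj t0 t1)).
  rewrite (bigD1 k) ?leqnn //=.
  apply: (@le_trans _ _ (pt t ord0 k)).
    rewrite ptE eqxx; case: (k == i0) => /=; rewrite ?mulr1n ?mulr0n; lra.
  by rewrite lerDl sumr_ge0.
have ptG t : a < t <= 1 ->
    Gset m n Smin Smax (Omega_lex (nseq n s)) alpha (pt t).
  move=> /andP[hat t1]; have t0 : 0 <= t by apply: le_trans (ltW hat).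
  have h01 : 0 <= t <= 1 by rewrite t0 t1.
  split; first exact: ptS.
  rewrite probF_nseq // -an.
  apply: (@lt_le_trans _ _ (t ^+ n)); first by rewrite ltrXn2r // -lt0n.
  by rewrite lerXn2r // ?nnegrE // ?ptQ //; apply: le_trans (ptQ t h01).
have csum (P : pred 'I_m) :
    continuous (fun q : 'rV[R]_m => \sum_(i < m | P i) q ord0 i).
  have hc : continuous (fun x : R * R => x.1 + x.2) by exact: add_continuous.
  have := (@continuous_big R _ +%R 0 P hc _ (index_enum 'I_m)
     (fun i (q : 'rV[R]_m) => q ord0 i)).
  apply. by move=> i _; exact: coord_continuous.
split.
  exists (pt a); last by rewrite ptM; lra.
  rewrite /Fset => B nB.
  have cpt : continuous pt.
    move=> t; rewrite /pt; apply: cvgD; first exact: cvg_cst.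
    by apply: cvgZ; [exact: cvg_id | exact: cvg_cst].
  have /nbhs_ballP[e /= e0 He] := cpt a B nB.
  pose d := Order.min (e / 2) (1 - a).
  have d0 : 0 < d by rewrite lt_min divr_gt0 //= subr_gt0.
  have d1 : d <= 1 - a by rewrite ge_min lexx orbT.
  have d2 : d <= e / 2 by rewrite ge_min lexx.
  exists (pt (a + d)); split.
    by apply: ptG; apply/andP; split; lra.
  apply: He; rewrite -ball_normE /ball_ /=.
  rewrite opprD addrA subrr add0r normrN gtr0_norm //; lra.
move=> y [p Fp <-].
have cl (f : 'rV[R]_m -> R) (D : set R) : continuous f -> closed D ->
    (forall q, Gset m n Smin Smax (Omega_lex (nseq n s)) alpha q -> D (f q)) ->
    D (f p).
  by move=> cf cD H; exact: (closure_pre cf cD H Fp).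
have Hp0 i : 0 <= p ord0 i.
  have H : forall q, Gset m n Smin Smax (Omega_lex (nseq n s)) alpha q ->
      [set x : R | 0 <= x]%classic (q ord0 i).
    by move=> q [[Hq _] _]; exact: Hq.
  exact: (cl (fun q : 'rV[R]_m => q ord0 i) _ (@coord_continuous R 1 m ord0 i) (@closed_ge _ 0) H).
have Hs1 : \sum_(i < m) p ord0 i <= 1.
  have H : forall q, Gset m n Smin Smax (Omega_lex (nseq n s)) alpha q ->
      [set x : R | x <= 1]%classic (\sum_(i < m) q ord0 i).
    by move=> q [[_ Hq] _] /=; rewrite Hq.
  exact: (cl (fun q : 'rV[R]_m => \sum_(i < m) q ord0 i) _ (csum predT) (@closed_le _ 1) H).
have Hs2 : 1 <= \sum_(i < m) p ord0 i.
  have H : forall q, Gset m n Smin Smax (Omega_lex (nseq n s)) alpha q ->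
      [set x : R | 1 <= x]%classic (\sum_(i < m) q ord0 i).
    by move=> q [[_ Hq] _] /=; rewrite Hq.
  exact: (cl (fun q : 'rV[R]_m => \sum_(i < m) q ord0 i) _ (csum predT) (@closed_ge _ 1) H).
have Hq : a <= \sum_(i < m | (k <= i)%N) p ord0 i.
  have H : forall q, Gset m n Smin Smax (Omega_lex (nseq n s)) alpha q ->
      [set x : R | a <= x]%classic (\sum_(i < m | (k <= i)%N) q ord0 i); last first.
    exact: (cl (fun q : 'rV[R]_m => \sum_(i < m | (k <= i)%N) q ord0 i) _
       (csum (fun i => (k <= i)%N)) (@closed_ge _ a) H).
  move=> q [[Hq0 _] Hlt] /=.
  rewrite probF_nseq // in Hlt.
  have q0 : 0 <= \sum_(i < m | (k <= i)%N) q ord0 i by apply: sumr_ge0.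
  rewrite leNgt; apply/negP => qa.
  have : (\sum_(i < m | (k <= i)%N) q ord0 i) ^+ n < a ^+ n.
    by rewrite ltrXn2r // -lt0n.
  by rewrite an => /(lt_trans Hlt); rewrite ltxx.
set q := \sum_(i < m | (k <= i)%N) p ord0 i in Hq.
have Hsum : \sum_(i < m) p ord0 i = 1 by apply/eqP; rewrite eq_le Hs1 Hs2.
have Hr : \sum_(i < m | ~~ (k <= i)%N) p ord0 i = 1 - q.
  by move: Hsum; rewrite (bigID (fun i : 'I_m => (k <= i)%N)) /= -/q; lra.
rewrite /mean (bigID (fun i : 'I_m => (k <= i)%N)) /=.
have L1 : s * q <= \sum_(i < m | (k <= i)%N) p ord0 i * Sgrid m Smin Smax i.
  rewrite /q mulr_sumr; apply: ler_sum => i ki.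
  by rewrite mulrC ler_wpM2l // Sgrid_le.
have L2 : Smin * (1 - q) <=
    \sum_(i < m | ~~ (k <= i)%N) p ord0 i * Sgrid m Smin Smax i.
  rewrite -Hr mulr_sumr; apply: ler_sum => i _.
  by rewrite mulrC ler_wpM2l // Sgrid_ge.
have : 0 <= (s - Smin) * (q - a) by apply: mulr_ge0; lra.
nra.
Qed.
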